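(* Let $0<m\le L$ and let $(\alpha,\beta,\gamma)$ be constant parameters such that, for every $f\in\mathcal{Q}_m^L$, the spectral radius of the matrix $A$ equals $\rho=1-1/T_s\in(0,1)$. Then $$\hat J_{\max}:=\max_{\lambda\in[m,L]}\hat J(\lambda)\ge\frac{\sigma_w^2}{2(1+\rho)^2}\,T_s,\qquad \hat J_{\min}:=\min_{\lambda\in[m,L]}\hat J(\lambda)\ge\sigma_w^2 .$$
   Context: $\mathcal{Q}_m^L$ is the class of quadratic functions $f(x)=\tfrac12x^TQx-q^Tx$ on $\mathbb{R}^n$ with $Q=Q^T\succ0$ whose largest eigenvalue is $L$ and smallest is $m$. For the two-step momentum algorithm $x^{t+2}=x^{t+1}+\beta(x^{t+1}-x^t)-\alpha\nabla f\big(x^{t+1}+\gamma(x^{t+1}-x^t)\big)+\sigma_w w^t$ ($w^t$ white noise with zero mean and identity covariance, $\sigma_w\ge0$), the state matrix is $A=\begin{bmatrix}0&I\\-\beta I+\gamma\alpha Q&(1+\beta)I-(1+\gamma)\alpha Q\end{bmatrix}$. For $\lambda>0$ define $a(\lambda)=\beta-\gamma\alpha\lambda$, $b(\lambda)=(1+\gamma)\alpha\lambda-(1+\beta)$, $d(\lambda)=a(\lambda)+b(\lambda)+1$, $l(\lambda)=a(\lambda)-b(\lambda)+1$, $h(\lambda)=1-a(\lambda)$, and $\hat J(\lambda)=\dfrac{\sigma_w^2\,(d(\lambda)+l(\lambda))}{2\,d(\lambda)\,h(\lambda)\,l(\lambda)}$ (the contribution of a Hessian eigenvalue $\lambda$ to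 the steady-state variance of $x^t-x^\star$). *)

(* Defs.v *)
From HB Require Import structures.
From mathcomp Require Import all_boot all_order all_algebra.
From mathcomp Require Import complex.
Set Implicit Arguments. Unset Strict Implicit. Unset Printing Implicit Defensive.
Import Order.TTheory GRing.Theory Num.Theory.
Local Open Scope ring_scope.

Section Defs.
Variable R : rcfType.

Definition sym_mx n (Q : 'M[R]_n) : Prop := Q^T = Q.

Definition posdef_mx n (Q : 'M[R]_n) : Prop :=
  forall x : 'cV[R]_n, x != 0 -> 0 < (x^T *m Q *m x) ord0 ord0.

Definition in_QmL n (m L : R) (Q : 'M[R]_n) : Prop :=
  [/\ sym_mx Q, posdef_mx Q,
      eigenvalue Q L /\ (forall mu : R, eigenvalue Q mu -> mu <= L) &
      eigenvalue Q m /\ (forall mu : R, eigenvalue Q mu -> m <= mu)].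

Definition state_mx n (alpha beta gamma : R) (Q : 'M[R]_n) : 'M[R]_(n + n) :=
  block_mx 0 1%:M
           (- beta%:M + (gamma * alpha) *: Q)
           ((1 + beta)%:M - ((1 + gamma) * alpha) *: Q).

Definition cplx_eigenvalue k (A : 'M[R]_k) (z : R[i]) : Prop :=
  root (char_poly (map_mx (fun x : R => (x%:C)%C) A)) z.

Definition spectral_radius_eq k (A : 'M[R]_k) (r : R) : Prop :=
  (exists2 z, cplx_eigenvalue A z & Normc.normc z = r) /\
  (forall z, cplx_eigenvalue A z -> Normc.normc z <= r).

Definition a_fn (alpha beta gamma lam : R) : R := beta - gamma * alpha * lam.
Definition b_fn (alpha beta gamma lam : R) : R :=
  (1 + gamma) * alpha * lam - (1 + beta).
Definition d_fn alpha beta gamma lam : R :=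
  a_fn alpha beta gamma lam + b_fn alpha beta gamma lam + 1.
Definition l_fn alpha beta gamma lam : R :=
  a_fn alpha beta gamma lam - b_fn alpha beta gamma lam + 1.
Definition h_fn alpha beta gamma lam : R := 1 - a_fn alpha beta gamma lam.

Definition Jhat (sigma_w alpha beta gamma lam : R) : R :=
  sigma_w ^+ 2 * (d_fn alpha beta gamma lam + l_fn alpha beta gamma lam) /
  (2 * d_fn alpha beta gamma lam * h_fn alpha beta gamma lam
     * l_fn alpha beta gamma lam).

End Defs.

(* Main.v *)
Require Import Defs.
From HB Require Import structures.
From mathcomp Require Import all_boot all_order all_algebra.
From mathcomp Require Import complex.
From mathcomp Require Import ring lra.
Import Order.TTheory GRing.Theory Num.Theory.
Local Open Scope ring_scope.
Lemma stab_pos (R : rcfType) (a b x y r : R) :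
  x ^+ 2 - y ^+ 2 + b * x + a = 0 -> y * (2 * x + b) = 0 ->
  x ^+ 2 + y ^+ 2 <= r ^+ 2 -> (- b - x) ^+ 2 + y ^+ 2 <= r ^+ 2 ->
  0 < r -> r < 1 ->
  [/\ 0 < 1 + b + a, 0 < 1 - b + a & 0 < 1 - a].
Proof.
move=> e1 e2 n1 n2 r0 r1.
set x2 := - b - x.
have hb : b = - (x + x2) by rewrite /x2; ring.
have ha : a = x * x2 + y ^+ 2.
  by transitivity (a - (x ^+ 2 - y ^+ 2 + b * x + a)); [rewrite e1 subr0 | rewrite /x2; ring].
have hx1 : x ^+ 2 < 1 by nra.
have hx2 : x2 ^+ 2 < 1 by nra.
have p1 : 0 < 1 - x by nra.
have p2 : 0 < 1 + x by nra.
have p3 : 0 < 1 - x2 by nra.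
have p4 : 0 < 1 + x2 by nra.
rewrite ha hb; split.
- have -> : 1 + - (x + x2) + (x * x2 + y ^+ 2) = (1 - x) * (1 - x2) + y ^+ 2 by ring.
  by apply: ltr_pwDl; [apply: mulr_gt0 | apply: sqr_ge0].
- have -> : 1 - - (x + x2) + (x * x2 + y ^+ 2) = (1 + x) * (1 + x2) + y ^+ 2 by ring.
  by apply: ltr_pwDl; [apply: mulr_gt0 | apply: sqr_ge0].
- have : 0 <= (x - x2) ^+ 2 by apply: sqr_ge0.
  nra.
Qed.

Lemma root_ex (R : rcfType) (a b : R) :
  exists x y, x ^+ 2 - y ^+ 2 + b * x + a = 0 /\ y * (2 * x + b) = 0.
Proof.
have [hd|hd] := lerP 0 (b ^+ 2 - 4 * a).
  exists ((- b + Num.sqrt (b ^+ 2 - 4 * a)) / 2), 0; split; last by rewrite mul0r.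
  have := sqr_sqrtr hd; set s := Num.sqrt _ => hs.
  rewrite expr0n /= subr0.
  transitivity ((s ^+ 2 - (b ^+ 2 - 4 * a)) / 4); first by field.
  by rewrite hs subrr mul0r.
exists (- b / 2), (Num.sqrt (- (b ^+ 2 - 4 * a)) / 2); split; last by field.
have hd' : 0 <= - (b ^+ 2 - 4 * a) by lra.
have := sqr_sqrtr hd'; set s := Num.sqrt _ => hs.
transitivity ((- (b ^+ 2 - 4 * a) - s ^+ 2) / 4); first by field.
by rewrite hs subrr mul0r.
Qed.

Lemma min_bound (R : rcfType) (a b : R) :
  0 < 1 + b + a -> 0 < 1 - b + a -> 0 < 1 - a ->
  2 * ((1 + b + a) * (1 - a) * (1 - b + a)) <= (1 + b + a) + (1 - b + a).
Proof. move=> d l h. nra. Qed.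

Lemma key1 (R : rcfType) (r t : R) : 0 < r -> r < 1 -> t ^+ 2 <= r ^+ 2 ->
  (1 - t ^+ 2) * (1 - r * t) <= 2 * (1 + r * t) * (1 + r).
Proof.
move=> r0 r1 ht.
have ht1 : t ^+ 2 < 1 by nra.
have tl : -1 < t by nra.
have tu : t < 1 by nra.
have [t0|t0] := lerP 0 t.
  have : 0 <= r * t by apply: mulr_ge0; lra.
  have rt1 : 0 <= 1 - r * t by nra.
  have : (1 - t ^+ 2) * (1 - r * t) <= 1 - r * t.
    have := sqr_ge0 t. move=> ?. 
    rewrite -{2}[1 - r * t]mul1r; apply: ler_wpM2r => //; lra.
  move=> ?.
  nra.
set u := - t.
have u0 : 0 < u by rewrite /u; lra.
have uu : u ^+ 2 <= r ^+ 2 by rewrite /u sqrrN.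
have -> : (1 - t ^+ 2) * (1 - r * t) = (1 - u) * ((1 + u) * (1 + r * u)) by rewrite /u; ring.
have -> : 2 * (1 + r * t) * (1 + r) = 2 * (1 - r * u) * (1 + r) by rewrite /u; ring.
clearbody u.
have ur : u <= r by nra.
have h1 : (1 + u) * (1 + r * u) <= 2 * (1 + r) by nra.
have h2 : (1 - u) <= (1 - r * u) by nra.
have h3 : 0 <= 1 - u by lra.
have : (1 - u) * ((1 + u) * (1 + r * u)) <= (1 - u) * (2 * (1 + r)) by apply: ler_wpM2l.
nra.
Qed.

Lemma max_bound (R : rcfType) (a b x y r : R) :
  x ^+ 2 - y ^+ 2 + b * x + a = 0 -> y * (2 * x + b) = 0 ->
  x ^+ 2 + y ^+ 2 = r ^+ 2 -> (- b - x) ^+ 2 + y ^+ 2 <= r ^+ 2 ->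
  0 < r -> r < 1 ->
  2 * ((1 + b + a) * (1 - a) * (1 - b + a)) <=
  ((1 + b + a) + (1 - b + a)) * (2 * (1 + r) ^+ 2 * (1 - r)).
Proof.
move=> e1 e2 n1 n2 r0 r1.
set x2 := - b - x.
have hb : b = - (x + x2) by rewrite /x2; ring.
have ha : a = x * x2 + y ^+ 2.
  by transitivity (a - (x ^+ 2 - y ^+ 2 + b * x + a)); [rewrite e1 subr0 | rewrite /x2; ring].
have e3 : y * (x - x2) = 0 by rewrite -e2 /x2; ring.
rewrite ha hb.
have [y0|yn0] := eqVneq y 0.
  rewrite y0 in n1 n2 *.
  have n1' : x ^+ 2 = r ^+ 2 by rewrite -n1 expr0n /= addr0.
  have n2' : x2 ^+ 2 <= r ^+ 2 by move: n2; rewrite expr0n /= addr0.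
  have key : (1 - x2 ^+ 2) * (1 - x * x2) <= 2 * (1 + x * x2) * (1 + r).
    have : (x - r) * (x + r) = 0 by rewrite -subr_sqr n1' subrr.
    move/eqP; rewrite mulf_eq0 => /orP[/eqP h|/eqP h].
      have -> : x = r by rewrite -[x](subrK r) h add0r.
      exact: key1.
    have -> : x = - r by rewrite -[x](addrK r) h sub0r.
    have := @key1 _ r (- x2) r0 r1; rewrite sqrrN => /(_ n2').
    by rewrite !mulrN !mulNr opprK.
  have -> : 2 * ((1 + - (x + x2) + (x * x2 + 0 ^+ 2)) * (1 - (x * x2 + 0 ^+ 2)) *
     (1 - - (x + x2) + (x * x2 + 0 ^+ 2))) =
     2 * (1 - x ^+ 2) * ((1 - x2 ^+ 2) * (1 - x * x2)) by ring.
  have -> : (1 + - (x + x2) + (x * x2 + 0 ^+ 2) + (1 - - (x + x2) + (x * x2 + 0 ^+ 2))) *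
     (2 * (1 + r) ^+ 2 * (1 - r)) = 2 * (1 - r ^+ 2) * (2 * (1 + x * x2) * (1 + r)) by ring.
  rewrite n1'; apply: ler_wpM2l => //.
  nra.
have xx : x2 = x.
  by apply/eqP; rewrite eq_sym -subr_eq0; apply/eqP; apply: (mulfI yn0); rewrite mulr0.
rewrite xx in n2 *.
have hy : y ^+ 2 = r ^+ 2 - x ^+ 2 by rewrite -n1; ring.
rewrite hy.
have -> : 2 * ((1 + - (x + x) + (x * x + (r ^+ 2 - x ^+ 2))) * (1 - (x * x + (r ^+ 2 - x ^+ 2))) *
     (1 - - (x + x) + (x * x + (r ^+ 2 - x ^+ 2)))) =
     2 * (1 - r ^+ 2) * ((1 + r ^+ 2) ^+ 2 - 4 * x ^+ 2) by ring.
have -> : (1 + - (x + x) + (x * x + (r ^+ 2 - x ^+ 2)) + (1 - - (x + x) + (x * x + (r ^+ 2 - x ^+ 2)))) *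
     (2 * (1 + r) ^+ 2 * (1 - r)) = 2 * (1 - r ^+ 2) * (2 * (1 + r ^+ 2) * (1 + r)) by ring.
apply: ler_wpM2l; first nra.
have := sqr_ge0 x.
nra.
Qed.

Lemma Jmin (R : rcfType) (s a b : R) :
  0 < 1 + b + a -> 0 < 1 - b + a -> 0 < 1 - a ->
  2 * ((1 + b + a) * (1 - a) * (1 - b + a)) <= (1 + b + a) + (1 - b + a) ->
  s ^+ 2 <= s ^+ 2 * ((1 + b + a) + (1 - b + a)) / (2 * (1 + b + a) * (1 - a) * (1 - b + a)).
Proof.
move=> d l h H.
have D0 : 0 < 2 * (1 + b + a) * (1 - a) * (1 - b + a).
  by apply: mulr_gt0 => //; apply: mulr_gt0 => //; apply: mulr_gt0.
rewrite -mulrA; rewrite -{1}[s ^+ 2]mulr1; apply: ler_wpM2l; first exact: sqr_ge0.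
by rewrite ler_pdivlMr // mul1r !mulrA in H *.
Qed.

Lemma Jmax (R : rcfType) (s a b r : R) :
  0 < 1 + b + a -> 0 < 1 - b + a -> 0 < 1 - a -> 0 < r -> r < 1 ->
  2 * ((1 + b + a) * (1 - a) * (1 - b + a)) <= ((1 + b + a) + (1 - b + a)) * (2 * (1 + r) ^+ 2 * (1 - r)) ->
  s ^+ 2 / (2 * (1 + r) ^+ 2) * (1 / (1 - r)) <=
  s ^+ 2 * ((1 + b + a) + (1 - b + a)) / (2 * (1 + b + a) * (1 - a) * (1 - b + a)).
Proof.
move=> d l h r0 r1 H.
have D0 : 0 < 2 * (1 + b + a) * (1 - a) * (1 - b + a).
  by apply: mulr_gt0 => //; apply: mulr_gt0 => //; apply: mulr_gt0.
have K0 : 0 < 2 * (1 + r) ^+ 2 * (1 - r).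
  apply: mulr_gt0; last lra.
  apply: mulr_gt0; first lra.
  apply: exprn_gt0; lra.
have -> : s ^+ 2 / (2 * (1 + r) ^+ 2) * (1 / (1 - r)) = s ^+ 2 * (1 / (2 * (1 + r) ^+ 2 * (1 - r))).
  field; apply/andP; split; [lra|].
  lra.
rewrite -[X in _ <= X]mulrA; apply: ler_wpM2l; first exact: sqr_ge0.
rewrite ler_pdivlMr // mul1r mulrC ler_pdivrMr //.
by rewrite !mulrA in H *.
Qed.

Lemma rv_nz {F : nzRingType} {n} {v : 'rV[F]_n} : v != 0 -> exists k, v 0 k != 0.
Proof.
move=> vnz.
have /existsP [j hj] : [exists j, v 0 j != 0]; last by exists j.
apply: contraNT vnz; rewrite negb_exists => /forallP h.
apply/eqP; apply/matrixP => i j; rewrite ord1.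
by move: (h j); rewrite negbK !mxE => /eqP.
Qed.

Lemma eig_diag (F : fieldType) n (q : 'rV[F]_n) mu :
  eigenvalue (diag_mx q) mu <-> exists k, mu = q 0 k.
Proof.
split.
  move/eigenvalueP => [v e vnz]; have [k hk] := rv_nz vnz.
  exists k; move: (congr1 (fun M : 'M[F]_(1,n) => M 0 k) e); rewrite mul_mx_diag !mxE => h.
  by apply: (mulIf hk); rewrite -h mulrC.
move=> [k ->]; apply/eigenvalueP; exists (delta_mx 0 k); last first.
  by apply/negP => /eqP/matrixP/(_ 0 k); rewrite !mxE !eqxx /= => /eqP; rewrite oner_eq0.
rewrite mul_mx_diag; apply/matrixP => i j; rewrite !mxE ord1 eqxx /=.
by case: (eqVneq j k) => [->|jk] /=; rewrite ?mul1r ?mulr1 ?mul0r ?mulr0.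
Qed.

Lemma posdef_diag (R : rcfType) n (q : 'rV[R]_n) :
  (forall k, 0 < q 0 k) -> posdef_mx (diag_mx q).
Proof.
move=> qp x xnz.
have xtnz : x^T != 0 by apply: contraNN xnz => /eqP h; rewrite -[x]trmxK h trmx0.
have [k hk] := rv_nz xtnz.
rewrite mul_mx_diag mxE.
under eq_bigr do rewrite mxE.
rewrite (bigD1 k) //=; apply: ltr_pwDl.
  rewrite mxE in hk *.
  have : 0 < x k 0 ^+ 2 by rewrite exprn_even_gt0 //= hk orbT.
  have := qp k. nra.
apply: sumr_ge0 => i _; rewrite !mxE.
have := qp i; have := sqr_ge0 (x i 0); nra.
Qed.


Lemma root2 (R : rcfType) (a b x y : R) :
  x ^+ 2 - y ^+ 2 + b * x + a = 0 -> y * (2 * x + b) = 0 ->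
  (- b - x) ^+ 2 - (- y) ^+ 2 + b * (- b - x) + a = 0 /\ (- y) * (2 * (- b - x) + b) = 0.
Proof.
move=> e1 e2; split.
  by rewrite -e1; ring.
by transitivity (y * (2 * x + b)); [ring | exact e2].
Qed.

Lemma aff (R : realFieldType) (f : R -> R) (p s m L lam : R) :
  (forall t, f t = p + s * t) -> 0 < f m -> 0 < f L -> m <= lam <= L -> 0 < f lam.
Proof.
move=> hf; rewrite !hf => h1 h2 /andP[l1 l2].
have [s0|s0] := lerP 0 s.
  have : s * m <= s * lam by apply: ler_wpM2l.
  lra.
have : s * L <= s * lam by apply: ler_wnM2l => //; lra.
lra.
Qed.

Lemma eig_block (F : fieldType) n (c d : 'rV[F]_n) (z : F) :
  eigenvalue (block_mx 0 1%:M (diag_mx c) (diag_mx d)) z <->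
  exists j, z ^+ 2 = c 0 j + d 0 j * z.
Proof.
split.
  move/eigenvalueP => [v]; rewrite -[v]hsubmxK.
  move: (lsubmx v) (rsubmx v) => u1 u2.
  rewrite mul_row_block scale_row_mx.
  rewrite !mulmx0 !add0r mulmx1 row_mx_eq0 => /eq_row_mx [e1 e2] nz.
  have u2nz : u2 != 0.
    apply: contraNN nz => /eqP h; rewrite h eqxx andbT.
    by move: e2; rewrite h mul0mx addr0 scaler0 => ->.
  have /existsP [j hj] : [exists j, u2 0 j != 0].
    apply: contraNT u2nz; rewrite negb_exists => /forallP h.
    apply/eqP; apply/matrixP => i j; rewrite ord1; apply/eqP.
    by move: (h j); rewrite negbK !mxE.
  exists j; rewrite !mul_mx_diag in e1 e2.
  have := congr1 (fun M : 'M[F]_(1,n) => M 0 j) e1; rewrite !mxE => f1.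
  have := congr1 (fun M : 'M[F]_(1,n) => M 0 j) e2; rewrite !mxE => f2.
  apply: (mulIf hj).
  rewrite expr2 -mulrA -f2 mulrDr -f1; ring.
move=> [j hj]; apply/eigenvalueP.
exists (row_mx ((z - d 0 j) *: delta_mx 0 j) (delta_mx 0 j)); last first.
  by rewrite row_mx_eq0 negb_and; apply/orP; right; apply/negP => /eqP/matrixP/(_ 0 j); rewrite !mxE !eqxx /= => /eqP; rewrite oner_eq0.
rewrite mul_row_block scale_row_mx !mulmx0 !add0r mulmx1.
rewrite !mul_mx_diag.
congr row_mx; apply/matrixP => i k; rewrite !mxE ord1 eqxx /=.
  case: (eqVneq k j) => [->|kj] /=; last by rewrite mul0r !mulr0.
  by rewrite mul1r mulr1 mulrBr -expr2 hj; ring.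
case: (eqVneq k j) => [->|kj] /=; last by rewrite !mul0r !mulr0 addr0.
by rewrite mul1r !mulr1 subrK.
Qed.

Lemma state_diag (R : rcfType) n (al be ga : R) (q : 'rV[R]_n) :
  state_mx al be ga (diag_mx q) =
  block_mx 0 1%:M (diag_mx (\row_j (- a_fn al be ga (q 0 j))))
                  (diag_mx (\row_j (- b_fn al be ga (q 0 j)))).
Proof.
rewrite /state_mx; congr block_mx; apply/matrixP => i j; rewrite !mxE;
  case: (eqVneq i j) => [->|ij] /=; rewrite ?mulr1n ?mulr0n /a_fn /b_fn; try ring.
Qed.

Section Cplx.
Local Open Scope complex_scope.
Lemma quad_cplx (R : rcfType) (A B x y : R) :
  (x +i* y) ^+ 2 = (- A)%:C + (- B)%:C * (x +i* y) <->
  x ^+ 2 - y ^+ 2 + B * x + A = 0 /\ y * (2 * x + B) = 0.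
Proof.
split.
  move/eqP; rewrite eq_complex /= => /andP[/eqP h1 /eqP h2].
  split.
    by transitivity ((x * x - y * y) - (- A + (- B * x - 0 * y))); [ring | rewrite h1 subrr].
  by transitivity ((x * y + y * x) - (0 + (- B * y + 0 * x))); [ring | rewrite h2 subrr].
move=> [h1 h2]; apply/eqP; rewrite eq_complex /=; apply/andP; split.
  by rewrite -subr_eq0; apply/eqP; transitivity (x ^+ 2 - y ^+ 2 + B * x + A); [ring | exact h1].
by rewrite -subr_eq0; apply/eqP; transitivity (y * (2 * x + B)); [ring | exact h2].
Qed.

Lemma cplx_eig_state (R : rcfType) n (al be ga : R) (q : 'rV[R]_n) x y :
  cplx_eigenvalue (state_mx al be ga (diag_mx q)) (x +i* y) <->
  exists j, x ^+ 2 - y ^+ 2 + b_fn al be ga (q 0 j) * x + a_fn al be ga (q 0 j) = 0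
         /\ y * (2 * x + b_fn al be ga (q 0 j)) = 0.
Proof.
rewrite /cplx_eigenvalue -eigenvalue_root_char state_diag.
rewrite map_block_mx (map_mx1 (real_complex R)) !(map_diag_mx (real_complex R)).
rewrite (_ : map_mx _ 0 = 0); last by apply/matrixP => i j; rewrite !mxE.
rewrite eig_block.
by split=> -[j h]; exists j; move: h; rewrite !mxE quad_cplx.
Qed.
End Cplx.

Theorem proposition6 (R : rcfType) (n : nat) (m L alpha beta gamma sigma_w rho : R) :
  ((1 < n)%N \/ ((0 < n)%N /\ m = L)) ->
  0 < m -> m <= L -> 0 <= sigma_w ->
  0 < rho -> rho < 1 ->
  (forall Q : 'M[R]_n, in_QmL m L Q ->
     spectral_radius_eq (state_mx alpha beta gamma Q) rho) ->
  let Ts := 1 / (1 - rho) in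
  (exists2 lam, m <= lam <= L &
     sigma_w ^+ 2 / (2 * (1 + rho) ^+ 2) * Ts <= Jhat sigma_w alpha beta gamma lam) /\
  (forall lam, m <= lam <= L -> sigma_w ^+ 2 <= Jhat sigma_w alpha beta gamma lam).
Proof.
move=> hn hm hmL hs r0 r1 hQ Ts.
have n0 : (0 < n)%N by case: hn => [h|[h _]] //; apply: ltn_trans h.
pose q : 'rV[R]_n := \row_(j < n) (if (j : nat) == 0%N then m else L).
have qE : forall k, q 0 k = if (k : nat) == 0%N then m else L by move=> k; rewrite mxE.
have qb : forall k, m <= q 0 k <= L.
  by move=> k; rewrite qE; case: ifP => _; rewrite ?lexx ?hmL.
have [jm hjm] : exists j, q 0 j = m by exists (Ordinal n0); rewrite qE.
have [jL hjL] : exists j, q 0 j = L.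
  case: hn => [h|[_ e]]; [exists (Ordinal h) | exists (Ordinal n0)]; rewrite qE //.
have Qin : in_QmL m L (diag_mx q).
  split.
  - exact: tr_diag_mx.
  - apply: posdef_diag => k; have := qb k; move/andP=> [? ?]; lra.
  - split; first by apply/eig_diag; exists jL.
    by move=> mu /eig_diag [k ->]; case/andP: (qb k).
  - split; first by apply/eig_diag; exists jm.
    by move=> mu /eig_diag [k ->]; case/andP: (qb k).
have [[z zeig zn] zall] := hQ _ Qin.
set A := a_fn alpha beta gamma; set B := b_fn alpha beta gamma.
have stab : forall j x y, x ^+ 2 - y ^+ 2 + B (q 0 j) * x + A (q 0 j) = 0 ->
    y * (2 * x + B (q 0 j)) = 0 -> x ^+ 2 + y ^+ 2 <= rho ^+ 2.
  move=> j x y e1 e2.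
  have := zall (Complex x y); rewrite cplx_eig_state => /(_ (ex_intro _ j (conj e1 e2))) /=.
  have s0 : 0 <= x ^+ 2 + y ^+ 2 by apply: addr_ge0; apply: sqr_ge0.
  have := sqr_sqrtr s0; have := sqrtr_ge0 (x ^+ 2 + y ^+ 2).
  set t := Num.sqrt _ => t0 <- tr.
  by rewrite !expr2; apply: ler_pM.
have pos : forall j, [/\ 0 < 1 + B (q 0 j) + A (q 0 j), 0 < 1 - B (q 0 j) + A (q 0 j)
    & 0 < 1 - A (q 0 j)].
  move=> j; have [x [y [e1 e2]]] := @root_ex R (A (q 0 j)) (B (q 0 j)).
  have [e1' e2'] := @root2 _ _ _ _ _ e1 e2.
  have := stab _ _ _ e1' e2'; rewrite sqrrN => n2.
  exact: (@stab_pos _ _ _ _ _ _ e1 e2) (stab _ _ _ e1 e2) n2 r0 r1.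
have E1 : forall a b : R, a + b + 1 = 1 + b + a by move=> a b; ring.
split.
  move: zeig zn; case: z => x y; rewrite cplx_eig_state => -[j [e1 e2]] /= zn.
  have n1 : x ^+ 2 + y ^+ 2 = rho ^+ 2.
    by rewrite -zn sqr_sqrtr //; apply: addr_ge0; apply: sqr_ge0.
  have [e1' e2'] := @root2 _ _ _ _ _ e1 e2.
  have := stab _ _ _ e1' e2'; rewrite sqrrN => n2.
  exists (q 0 j); first exact: qb.
  rewrite /Ts /Jhat /d_fn /l_fn /h_fn -/A -/B !E1.
  have [d l h] := pos j.
  by apply: Jmax => //; apply: (@max_bound _ _ _ _ _ _ e1 e2) n1 n2 r0 r1.
move=> lam hlam.
rewrite /Jhat /d_fn /l_fn /h_fn -/A -/B !E1.
have P1 : 0 < 1 + B lam + A lam.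
  apply: (@aff _ (fun t => 1 + B t + A t) 0 alpha m L) => //.
  - by move=> t; rewrite /A /B /a_fn /b_fn; ring.
  - by rewrite -hjm; case: (pos jm).
  - by rewrite -hjL; case: (pos jL).
have P2 : 0 < 1 - B lam + A lam.
  apply: (@aff _ (fun t => 1 - B t + A t) (2 + 2 * beta) (- (1 + 2 * gamma) * alpha) m L) => //.
  - by move=> t; rewrite /A /B /a_fn /b_fn; ring.
  - by rewrite -hjm; case: (pos jm).
  - by rewrite -hjL; case: (pos jL).
have P3 : 0 < 1 - A lam.
  apply: (@aff _ (fun t => 1 - A t) (1 - beta) (gamma * alpha) m L) => //.
  - by move=> t; rewrite /A /B /a_fn /b_fn; ring.
  - by rewrite -hjm; case: (pos jm).
  - by rewrite -hjL; case: (pos jL).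
by apply: Jmin => //; apply: min_bound.
Qed.
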